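(* Let $X$ be a real Banach space, $F$ a non-empty closed bounded subset of $X$, and $x\in X$ with $Q_F(x)\neq\emptyset$. The following are equivalent. (1) Every maximizing sequence in $F$ for $x$ converges. (2) $\mathrm{diam}(Q_F(x,\frac1n))\to0$. (3) $Q_F(x)$ is a singleton and $Q_F(x,\frac1n)\xrightarrow{V}Q_F(x)$. (4) $Q_F(x)$ is a singleton and $Q_F(x,\frac1n)\xrightarrow{H}Q_F(x)$. (5) $F$ is SUR at $x$.
   Context: $B_X$ is the closed unit ball. $r(F,x)=\sup_{y\in F}\|x-y\|$, $Q_F(x,\delta)=\{y\in F:\|x-y\|\ge r(F,x)-\delta\}$ for $\delta\ge0$, $Q_F(x)=Q_F(x,0)$. A maximizing sequence in $F$ for $x$ is a sequence $(y_n)$ in $F$ with $\|x-y_n\|\to r(F,x)$. $F$ is SUR at $x$ if $Q_F(x)$ is a singleton and for every $\epsilon>0$ there is $\delta>0$ with $Q_F(x,\delta)\subseteq Q_F(x)+\epsilon B_X$. For closed bounded sets $C_n,C_0$: $C_n\xrightarrow{V}C_0$ means both (a) for every open $U\supseteq C_0$, eventually $C_n\subseteq U$, and (b) for every open $U$ with $C_0\cap U\ne\emptyset$, eventually $C_n\cap U\neq\emptyset$; $C_n\xrightarrow{H}C_0$ means for every $\epsilon>0$, eventually $C_n\subseteq C_0+\epsilon B_X$ and $C_0\subseteq C_n+\epsilon B_X$. *)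

(* Defs.v *)
From HB Require Import structures.
From mathcomp Require Import all_boot all_order all_algebra.
From mathcomp Require Import all_classical all_reals all_analysis.
Set Implicit Arguments. Unset Strict Implicit. Unset Printing Implicit Defensive.
Import Order.TTheory GRing.Theory Num.Theory.
Import numFieldNormedType.Exports.
Local Open Scope classical_set_scope.
Local Open Scope ring_scope.

Section Defs.
Context {R : realType} {X : normedModType R}.

Definition farthest_rad (F : set X) (x : X) : R :=
  sup [set `|x - y| | y in F].

Definition Qset (F : set X) (x : X) (delta : R) : set X :=
  [set y | F y /\ farthest_rad F x - delta <= `|x - y|].

Definition Q0 (F : set X) (x : X) : set X := Qset F x 0.

Definition maximizing_seq (F : set X) (x : X) (y : nat -> X) : Prop :=
  (forall n, F (y n)) /\ (fun n => `|x - y n|) @ \oo --> farthest_rad F x.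

Definition diam (A : set X) : R :=
  sup [set `|a - b| | a in A & b in A].

Definition enlarge (A : set X) (eps : R) : set X :=
  [set z | exists2 a, A a & `|z - a| <= eps].

Definition is_singleton (A : set X) : Prop := exists y, A = [set y].

Definition V_conv (C : nat -> set X) (C0 : set X) : Prop :=
  (forall U : set X, open U -> C0 `<=` U -> \forall n \near \oo, C n `<=` U) /\
  (forall U : set X, open U -> C0 `&` U !=set0 ->
     \forall n \near \oo, C n `&` U !=set0).

Definition H_conv (C : nat -> set X) (C0 : set X) : Prop :=
  forall eps : R, 0 < eps -> \forall n \near \oo,
    C n `<=` enlarge C0 eps /\ C0 `<=` enlarge (C n) eps.

Definition SUR (F : set X) (x : X) : Prop :=
  is_singleton (Q0 F x) /\
  forall eps : R, 0 < eps -> exists2 delta : R, 0 < delta &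
    Qset F x delta `<=` enlarge (Q0 F x) eps.

End Defs.

(* Main.v *)
Require Import Defs.
From HB Require Import structures.
From mathcomp Require Import all_boot all_order all_algebra.
From mathcomp Require Import all_classical all_reals all_analysis.
From mathcomp Require Import lra.
Import Order.TTheory GRing.Theory Num.Theory.
Import numFieldNormedType.Exports.
Local Open Scope classical_set_scope.
Local Open Scope ring_scope.

Lemma ev_ex (P : nat -> Prop) :
  (\forall n \near \oo, P n) -> exists N, forall n, (N <= n)%N -> P n.
Proof. by case=> N _ HN; exists N => n Nn; apply: HN. Qed.

Lemma ex_ev (P : nat -> Prop) :
  (exists N, forall n, (N <= n)%N -> P n) -> \forall n \near \oo, P n.
Proof. by case=> N HN; exists N => // n Nn; apply: HN. Qed.

Lemma has_supF (R : realType) (X : normedModType R) (F : set X) (x : X) (M : R) :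
  F !=set0 -> (forall y, F y -> `|y| <= M) ->
  has_sup [set `|x - y| | y in F].
Proof.
move=> [y0 Fy0] FM; split; first by exists `|x - y0|; exists y0.
exists (`|x| + M) => _ [y Fy <-].
by apply: le_trans (ler_normB _ _) _; rewrite lerD2l FM.
Qed.

Lemma le_r (R : realType) (X : normedModType R) (F : set X) (x : X) (M : R) y :
  F !=set0 -> (forall y, F y -> `|y| <= M) -> F y ->
  `|x - y| <= farthest_rad F x.
Proof.
by move=> F0 FM Fy; rewrite /farthest_rad; apply: (sup_upper_bound (@has_supF _ _ _ x _ F0 FM)); exists y.
Qed.

Lemma diam_ub (R : realType) (X : normedModType R) (F A : set X) (M : R) a b :
  (forall y, F y -> `|y| <= M) -> A `<=` F -> A a -> A b ->
  `|a - b| <= diam A.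
Proof.
move=> FM AF Aa Ab; apply: sup_upper_bound; last by exists a => //; exists b.
split; first by exists `|a - b|; exists a => //; exists b.
exists (M + M) => _ [c Ac [d Ad <-]].
by apply: le_trans (ler_normB _ _) _; apply: lerD; apply: FM; apply: AF.
Qed.

Lemma diam_lt (R : realType) (X : normedModType R) (A : set X) (e : R) :
  A !=set0 -> e < diam A -> exists a b, [/\ A a, A b & e < `|a - b|].
Proof.
move=> [a0 Aa0] lt; apply: contrapT => H.
suff : diam A <= e by rewrite leNgt lt.
apply: ge_sup; first by exists `|a0 - a0|; exists a0 => //; exists a0.
move=> _ [a Aa [b Ab <-]]; rewrite leNgt; apply/negP => h; apply: H.
by exists a, b.
Qed.

Lemma Qset_mono (R : realType) (X : normedModType R) (F : set X) (x : X) d1 d2 :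
  d1 <= d2 -> Qset F x d1 `<=` Qset F x d2.
Proof. by move=> d12 y [Fy h]; split => //; lra. Qed.

Lemma inv_mono (R : realType) (n m : nat) : (n <= m)%N ->
  (m.+1%:R : R)^-1 <= (n.+1%:R)^-1.
Proof.
move=> nm; rewrite lef_pV2 ?posrE ?ltr0Sn // ler_nat ltnS //.
Qed.

Theorem theorem2p6 (R : realType) (X : completeNormedModType R)
  (F : set X) (x : X) :
  F !=set0 -> closed F -> (exists M : R, forall y, F y -> `|y| <= M) ->
  Q0 F x !=set0 ->
  [<-> (forall y : nat -> X, maximizing_seq F x y -> cvg (y @ \oo));
       (fun n : nat => diam (Qset F x (n.+1%:R)^-1)) @ \oo --> (0 : R);
       is_singleton (Q0 F x) /\ V_conv (fun n : nat => Qset F x (n.+1%:R)^-1) (Q0 F x);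
       is_singleton (Q0 F x) /\ H_conv (fun n : nat => Qset F x (n.+1%:R)^-1) (Q0 F x);
       SUR F x].
Proof.
move=> F0 clF [M FM] [q0 Hq0].
have QF : forall d, Qset F x d `<=` F by move=> d y [].
have Q0sub : forall n : nat, Q0 F x `<=` Qset F x (n.+1%:R)^-1.
  by move=> n; apply: Qset_mono; rewrite invr_ge0 ler0n.
have Qmono : forall n m : nat, (n <= m)%N ->
    Qset F x (m.+1%:R)^-1 `<=` Qset F x (n.+1%:R)^-1.
  by move=> n m nm; apply: Qset_mono; apply: inv_mono.
have diam0 : forall n : nat, 0 <= diam (Qset F x (n.+1%:R)^-1).
  move=> n; have := @diam_ub R X F _ M q0 q0 FM (QF _) (Q0sub n q0 Hq0) (Q0sub n q0 Hq0).
  by rewrite subrr normr0.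
tfae.
- move=> H1; apply/cvgrPdist_le => e e0.
  have [//|Hne] := pselect (\forall n \near \oo, `|0 - diam (Qset F x (n.+1%:R)^-1)| <= e).
  exfalso.
  have HN : forall N : nat, exists ab : X * X,
      [/\ Qset F x (N.+1%:R)^-1 ab.1, Qset F x (N.+1%:R)^-1 ab.2 & e < `|ab.1 - ab.2|].
    move=> N; have [n [Nn lt]] : exists n, (N <= n)%N /\ e < diam (Qset F x (n.+1%:R)^-1).
      apply: contrapT => H; apply: Hne; apply: ex_ev; exists N => n Nn.
      rewrite sub0r normrN ger0_norm ?diam0 // leNgt; apply/negP => lt; apply: H.
      by exists n.
    have [a [b [Aa Ab ab]]] := @diam_lt _ _ _ _ (ex_intro _ q0 (Q0sub n q0 Hq0)) lt.
    by exists (a, b); split => //; apply: (Qmono N n Nn).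
  have [f Hf] := choice HN.
  pose z m := if odd m then (f m./2).2 else (f m./2).1.
  have zQ : forall m, Qset F x (m./2.+1%:R)^-1 (z m).
    by move=> m; rewrite /z; case: (odd m); have [] := Hf m./2.
  have maxz : maximizing_seq F x z.
    split; first by move=> m; have [] := zQ m.
    apply/cvgrPdist_le => d d0.
    have [N HN'] := ev_ex _ (near_infty_natSinv_lt (PosNum d0)).
    apply: ex_ev; exists N.*2 => m Nm.
    have Nm2 : (N <= m./2)%N by have := half_leq Nm; rewrite doubleK.
    have [Fz hz] := zQ m.
    have hr := @le_r _ _ _ x _ _ F0 FM Fz.
    have h1 := @inv_mono R _ _ Nm2.
    have h2 := HN' N (leqnn N); rewrite /= in h2.
    rewrite ger0_norm; last by rewrite subr_ge0.
    have h3 : farthest_rad F x - `|x - z m| <= (m./2.+1%:R)^-1 by rewrite lerBlDr addrC -lerBlDr.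
    by apply: le_trans h3 _; apply: ltW; apply: le_lt_trans h1 h2.
  move/cvg_ex: (H1 z maxz) => [l Hl].
  have e2 : 0 < e / 2 by rewrite divr_gt0.
  move/cvgrPdist_lt: Hl => /(_ _ e2) /(ev_ex _) [K HK].
  have KA : (K <= K.*2)%N by rewrite -addnn leq_addr.
  have hA := HK K.*2 KA.
  have hB := HK K.*2.+1 (leq_trans KA (leqnSn _)).
  have [_ _ hab] := Hf K.
  have zA : z K.*2 = (f K).1 by rewrite /z odd_double doubleK.
  have zB : z K.*2.+1 = (f K).2 by rewrite /z /= odd_double /= uphalf_double.
  rewrite zA in hA; rewrite zB in hB.
  have : `|(f K).1 - (f K).2| <= `|l - (f K).2| + `|l - (f K).1|.
    have -> : (f K).1 - (f K).2 = (l - (f K).2) - (l - (f K).1)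
      by rewrite opprB [in RHS]addrC addrA subrK.
    exact: ler_normB.
  lra.
- move=> H2.
  have Hd : forall d, 0 < d -> exists N, forall n, (N <= n)%N ->
      diam (Qset F x (n.+1%:R)^-1) < d.
    move=> d d0; move/cvgrPdist_lt: H2 => /(_ _ d0) /(ev_ex _) [N HN].
    exists N => n Nn; have := HN n Nn; rewrite sub0r normrN.
    exact: le_lt_trans (ler_norm _).
  have hq : Q0 F x = [set q0].
    rewrite eqEsubset; split; last by move=> p ->.
    move=> p Hp; apply/eqP; rewrite -subr_eq0 -normr_le0.
    apply/ler_addgt0Pr => d d0; rewrite add0r.
    have [N HN] := Hd d d0; apply: ltW; apply: le_lt_trans (HN N (leqnn N)).
    exact: (@diam_ub R X F _ M p q0 FM (QF _) (Q0sub N p Hp) (Q0sub N q0 Hq0)).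
  split; first by exists q0.
  split.
    move=> U oU sU.
    have : open_nbhs q0 U by split => //; apply: sU.
    rewrite open_nbhsE => -[_ hn].
    move/nbhs_ballP: hn => [d /= d0 hb].
    have [N HN] := Hd d d0; apply: ex_ev; exists N => n Nn p Hp.
    apply: hb; rewrite -ball_normE /=.
    apply: le_lt_trans (HN n Nn).
    exact: (@diam_ub R X F _ M q0 p FM (QF _) (Q0sub n q0 Hq0) Hp).
  move=> U _ [p [Qp Up]]; apply: nearW => n; exists p; split => //.
  exact: Q0sub.
- move=> [[q hq] [V1 V2]]; split; first by exists q.
  move=> e e0.
  have := V1 (ball q e) (ball_open q e) _.
  rewrite hq; move=> /(_ (fun p (hp : p = q) => eq_ind_r (fun p => ball q e p) (ballxx q e0) hp)).
  apply: filterS => n hn; split.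
    move=> p /hn; rewrite -ball_normE /= => hp; exists q => //.
    by rewrite distrC ltW.
  move=> p Qp; exists p; first by rewrite -hq in Qp; exact: Q0sub.
  by rewrite subrr normr0 ltW.
- move=> [[q hq] H4]; split; first by exists q.
  move=> e e0; have [N HN] := ev_ex _ (H4 e e0).
  exists (N.+1%:R)^-1; first by rewrite invr_gt0 ltr0Sn.
  exact: (HN N (leqnn N)).1.
- move=> [[q hq] S] y [Fy Hy]; apply: (cvgP q).
  apply/cvgrPdist_le => e e0; have [d d0 Hd] := S e e0.
  move/cvgrPdist_lt: Hy => /(_ d d0); apply: filterS => n hn.
  have : Qset F x d (y n).
    split => //; move: (le_lt_trans (ler_norm _) hn).
    by rewrite ltrBlDl -ltrBlDr => /ltW.
  move=> /Hd [a]; rewrite hq => -> ha.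
  by rewrite distrC.
Qed.
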